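(* Let $m,n\ge1$ be integers, $A=(a_{ij})$ an $n\times m$ real matrix and $q_{\max}>1$. Run the Iterated LLL-algorithm (ILLL) on $A$ and $q_{\max}$, producing for each integer $k$ with $1\le k\le k'$ a vector $q(k)=(q_1(k),\dots,q_m(k))\in\mathbb Z^m$. Then for every such $k$, $$\max_j|q_j(k)|\le 2^{\frac{(m+n-1)(m+n)}{4m}}\,2^{\frac{kn}{m}}\quad\text{and}\quad \max_i\|q_1(k)a_{i1}+\dots+q_m(k)a_{im}\|\le 2^{-k}.$$
   Context: $\|x\|$ denotes the distance from $x\in\mathbb R$ to the nearest integer. A basis $b_1,\dots,b_r$ of $\mathbb R^r$ with Gram–Schmidt vectors $b_i^*=b_i-\sum_{j<i}\mu_{ij}b_j^*$, $\mu_{ij}=(b_i,b_j^* )/(b_j^*,b_j^* )$, is reduced if $|\mu_{ij}|\le\frac12$ ($j<i$) and $|b_i^*+\mu_{i,i-1}b_{i-1}^*|^2\ge\frac34|b_{i-1}^*|^2$ ($1<i\le r$); the LLL-algorithm returns a reduced basis of the lattice generated by its input basis. The ILLL-algorithm: put $k'=\left\lceil -\frac{(m+n-1)(m+n)}{4n}+\frac{m\log_2 q_{\max}}{n}\right\rceil$ and, for $k\ge1$, $c(k)=\left(2^{-\frac{m+n+3}{4}-k+1}\right)^{\frac{m+n}{m}}$. Start with the basis given by the columns of $B=\begin{pmatrix} I_n & A\\ 0& c(1)I_m\end{pmatrix}$. In iteration $k=1,\dots,k'$: apply the LLL-algorithm to the current basis; from the first vector of the reduced basis, which has the form $(q_1a_{11}+\dots+q_ma_{1m}-p_1,\dots,q_1a_{n1}+\dots+q_ma_{nm}-p_n,c(k)q_1,\dots,c(k)q_m)^T$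 with $p_i,q_j\in\mathbb Z$, output $q(k)=(q_1,\dots,q_m)$; then divide the last $m$ coordinates of all basis vectors by $2^{\frac{m+n}{m}}$ (so the lattice in iteration $k$ is the one generated by the columns of $B$ with $c(1)$ replaced by $c(k)$). *)

(* Defs.v *)
From HB Require Import structures.
From mathcomp Require Import all_boot all_order all_algebra.
From mathcomp Require Import reals exp.
Set Implicit Arguments. Unset Strict Implicit. Unset Printing Implicit Defensive.
Import Order.TTheory GRing.Theory Num.Theory.
Local Open Scope ring_scope.

Section ILLL.
Variable R : realType.

Definition dist_int (x : R) : R :=
  Num.min (x - (Num.floor x)%:~R) ((Num.ceil x)%:~R - x).

Definition dotv (r : nat) (u v : 'cV[R]_r) : R := \sum_(i < r) u i 0 * v i 0.
Definition norm2 (r : nat) (u : 'cV[R]_r) : R := dotv u u.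

(* the i-th column (0-indexed, nat index) of a square matrix; 0 if i >= r.
   A basis b_1,...,b_r is represented by the matrix M whose columns are
   b_1,...,b_r, so b_{i+1} = colN M i. *)
Definition colN (r : nat) (M : 'M[R]_r) (i : nat) : 'cV[R]_r :=
  \col_k (oapp (fun j : 'I_r => M k j) 0 (insub i)).

(* Gram-Schmidt: gs_seq M i = [:: b_1^*; ...; b_i^*] *)
Fixpoint gs_seq (r : nat) (M : 'M[R]_r) (i : nat) : seq 'cV[R]_r :=
  match i with
  | 0 => [::]
  | i'.+1 =>
      let s := gs_seq M i' in
      rcons s (colN M i' -
        \sum_(j < i') (dotv (colN M i') (nth 0 s j) / norm2 (nth 0 s j))
                        *: nth 0 s j)
  end.

Definition gs (r : nat) (M : 'M[R]_r) (i : nat) : 'cV[R]_r :=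
  nth 0 (gs_seq M i.+1) i.

Definition gs_mu (r : nat) (M : 'M[R]_r) (i j : nat) : R :=
  dotv (colN M i) (gs M j) / norm2 (gs M j).

Definition is_basis (r : nat) (M : 'M[R]_r) : Prop :=
  forall c : 'I_r -> R, \sum_(i < r) c i *: col i M = 0 -> forall i, c i = 0.

(* LLL-reduced (0-indexed version of the definition in the paper) *)
Definition reduced (r : nat) (M : 'M[R]_r) : Prop :=
  (forall i j : nat, (j < i < r)%N -> `|gs_mu M i j| <= 1 / 2) /\
  (forall i : nat, (0 < i < r)%N ->
     norm2 (gs M i + gs_mu M i i.-1 *: gs M i.-1) >= 3 / 4 * norm2 (gs M i.-1)).

Definition in_lattice (r : nat) (M : 'M[R]_r) (x : 'cV[R]_r) : Prop :=
  exists z : 'I_r -> int, x = \sum_(i < r) (z i)%:~R *: col i M.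

Definition same_lattice (r : nat) (M N : 'M[R]_r) : Prop :=
  forall x, in_lattice M x <-> in_lattice N x.

Definition log2 (x : R) : R := ln x / ln 2.

Definition kprime (m n : nat) (qmax : R) : int :=
  Num.ceil (- (((m + n - 1) * (m + n))%:R / (4 * n%:R))
            + m%:R * log2 qmax / n%:R).

Definition cILLL (m n k : nat) : R :=
  powR (powR 2 (- ((m + n + 3)%:R / 4) - k%:R + 1)) ((m + n)%:R / m%:R).

(* the matrix B = [[I_n, A], [0, c I_m]] whose columns generate the lattice
   of iteration k *)
Definition BILLL (m n : nat) (A : 'M[R]_(n, m)) (c : R) : 'M[R]_(n + m) :=
  block_mx 1%:M A 0 (c%:M).

End ILLL.

(* Main.v *)
Require Import Defs.
From HB Require Import structures.
From mathcomp Require Import all_boot all_order all_algebra.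
From mathcomp Require Import reals exp.
From mathcomp Require Import ring lra.
Import Order.TTheory GRing.Theory Num.Theory.
Local Open Scope ring_scope.

Section GS.
Variable R : realType.
Variable r : nat.
Implicit Types u v w : 'cV[R]_r.

Lemma dotvC u v : dotv u v = dotv v u.
Proof. by rewrite /dotv; apply: eq_bigr => i _; rewrite mulrC. Qed.

Lemma dotvDl u v w : dotv (u + v) w = dotv u w + dotv v w.
Proof. by rewrite /dotv -big_split; apply: eq_bigr => i _ /=; rewrite mxE mulrDl. Qed.

Lemma dotvZl a u v : dotv (a *: u) v = a * dotv u v.
Proof. by rewrite /dotv mulr_sumr; apply: eq_bigr => i _; rewrite mxE mulrA. Qed.

Lemma dotv0l v : dotv 0 v = 0.
Proof. by rewrite /dotv big1 // => i _; rewrite mxE mul0r. Qed.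

Lemma dotv0r v : dotv v 0 = 0.
Proof. by rewrite dotvC dotv0l. Qed.

Lemma dotvNl u v : dotv (- u) v = - dotv u v.
Proof. by rewrite -scaleN1r dotvZl mulN1r. Qed.

Lemma dotvBl u v w : dotv (u - v) w = dotv u w - dotv v w.
Proof. by rewrite dotvDl dotvNl. Qed.

Lemma dotv_suml (I : Type) (s : seq I) (P : pred I) (F : I -> 'cV[R]_r) v :
  dotv (\sum_(i <- s | P i) F i) v = \sum_(i <- s | P i) dotv (F i) v.
Proof. exact: (big_morph (fun u => dotv u v) (fun x y => dotvDl x y v) (dotv0l v)). Qed.

Lemma norm2_ge0 u : 0 <= norm2 u.
Proof. by rewrite /norm2 /dotv; apply: sumr_ge0 => i _; rewrite -expr2 sqr_ge0. Qed.

Lemma norm2_eq0 u : norm2 u = 0 -> u = 0.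
Proof.
move=> h; apply/matrixP => i j; rewrite ord1 mxE.
have hp : forall l : 'I_r, true -> 0 <= u l 0 * u l 0 by move=> l _; rewrite -expr2 sqr_ge0.
have := @psumr_eq0P _ _ _ _ hp h i isT.
by rewrite -expr2 => /eqP; rewrite sqrf_eq0 => /eqP ->.
Qed.

Variable M : 'M[R]_r.

Lemma size_gs_seq i : size (gs_seq M i) = i.
Proof. by elim: i => //= i IH; rewrite size_rcons IH. Qed.

Lemma nth_gs_seq i j : (j < i)%N -> nth 0 (gs_seq M i) j = gs M j.
Proof.
elim: i j => // i IH j; rewrite ltnS leq_eqVlt => /orP [/eqP->|lt]; first by [].
by rewrite [gs_seq M i.+1]/= nth_rcons size_gs_seq lt; apply: IH.
Qed.

Lemma gsE i : gs M i = colN M i - \sum_(j < i) gs_mu M i j *: gs M j.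
Proof.
rewrite {1}/gs [gs_seq M i.+1]/= nth_rcons size_gs_seq ltnn eqxx.
congr (_ - _); apply: eq_bigr => j _.
by rewrite /gs_mu nth_gs_seq.
Qed.

Lemma gs_orth i j : (j < i)%N -> dotv (gs M i) (gs M j) = 0.
Proof.
elim/ltn_ind: i j => i IH j ji.
rewrite gsE dotvBl dotv_suml (bigD1 (Ordinal ji)) //= big1 ?addr0; last first.
  move=> l /eqP nl; rewrite dotvZl; case: (ltngtP l j) => [lj|jl|e].
  - by rewrite dotvC (IH j ji l lj) mulr0.
  - by rewrite (IH l (ltn_ord l) j jl) mulr0.
  - by exfalso; apply: nl; apply: val_inj.
rewrite dotvZl /gs_mu -/(norm2 (gs M j)).
case: (eqVneq (norm2 (gs M j)) 0) => [/norm2_eq0 ->|nz].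
  by rewrite /norm2 !dotv0r mulr0 subrr.
by rewrite divfK // subrr.
Qed.


Lemma colNE (i : 'I_r) a : colN M i a 0 = M a i.
Proof.
rewrite /colN mxE; case: insubP => [j _ /val_inj -> | ] //=.
by rewrite ltn_ord.
Qed.

Definition Gm : 'M[R]_r := \matrix_(a, b) gs M b a 0.
Definition Um : 'M[R]_r :=
  \matrix_(j, i) (if (j < i)%N then gs_mu M i j else if j == i then 1 else 0).

Lemma M_GU : M = Gm *m Um.
Proof.
apply/matrixP => a i; rewrite !mxE.
have e : M a i = gs M i a 0 + \sum_(j < i) gs_mu M i j * gs M j a 0.
  rewrite gsE -colNE.
  rewrite [in RHS]mxE [X in _ = _ + X + _]mxE summxE.
  under eq_bigr do rewrite mxE.
  by rewrite subrK.
rewrite /Gm /Um e (bigID (fun j : 'I_r => (j < i)%N)) /=.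
rewrite (big_ord_widen r (fun j => gs_mu M i j * gs M j a 0) (ltnW (ltn_ord i))).
rewrite [in RHS]addrC; congr (_ + _); last first.
  by apply: eq_bigr => j ji; rewrite !mxE ji mulrC.
rewrite (bigD1 i) ?ltnn //= big1 ?addr0.
  by rewrite !mxE ltnn eqxx mulr1.
move=> j /andP [jl ji]; rewrite !mxE (negbTE jl) (negbTE ji) mulr0 //.
Qed.



Lemma det_Um : \det Um = 1.
Proof.
rewrite -det_tr det_trig.
  by rewrite big1 // => i _; rewrite !mxE ltnn eqxx.
apply/is_trig_mxP => i j ij; rewrite !mxE.
rewrite ltnNge (ltnW ij) /=; case: eqP => // e.
by move: ij; rewrite e ltnn.
Qed.

Lemma det_GG : \det (Gm^T *m Gm) = \prod_(i < r) norm2 (gs M i).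
Proof.
rewrite det_trig.
  apply: eq_bigr => i _; rewrite !mxE /norm2 /dotv.
  by apply: eq_bigr => k _; rewrite /Gm !mxE.
apply/is_trig_mxP => i j ij; rewrite !mxE.
transitivity (dotv (gs M j) (gs M i)); last exact: gs_orth.
rewrite dotvC /dotv; apply: eq_bigr => k _; by rewrite /Gm !mxE.
Qed.

Lemma detM2 : \det M ^+ 2 = \prod_(i < r) norm2 (gs M i).
Proof.
rewrite expr2 -{1}det_tr -det_mulmx.
have -> : M^T *m M = Um^T *m (Gm^T *m Gm) *m Um.
  by rewrite {1 2}M_GU trmx_mul !mulmxA.
by rewrite 2!det_mulmx det_tr det_Um mul1r mulr1 det_GG.
Qed.

Lemma dotvDr u v w : dotv u (v + w) = dotv u v + dotv u w.
Proof. by rewrite dotvC dotvDl !(dotvC u). Qed.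

Lemma dotvZr a u v : dotv u (a *: v) = a * dotv u v.
Proof. by rewrite dotvC dotvZl dotvC. Qed.

Lemma lovasz_step (hred : reduced M) i : (0 < i < r)%N ->
  norm2 (gs M i.-1) <= 2 * norm2 (gs M i).
Proof.
case: hred => hs hl hi; have := hl i hi.
have hlt : (i.-1 < i)%N by case/andP: hi => h _; rewrite prednK.
have hmu : `|gs_mu M i i.-1| <= 1 / 2.
  by apply: hs; case/andP: hi => _ ->; rewrite hlt.
set mu := gs_mu M i i.-1 in hmu *.
have -> : norm2 (gs M i + mu *: gs M i.-1) =
          norm2 (gs M i) + mu ^+ 2 * norm2 (gs M i.-1).
  rewrite /norm2 !dotvDl !dotvDr !dotvZl !dotvZr (dotvC (gs M i.-1)).
  by rewrite (gs_orth _ _ hlt) !mulr0 addr0 add0r expr2 mulrA.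
have hm2 : mu ^+ 2 <= 1 / 4.
  rewrite -real_normK ?num_real //.
  have := normr_ge0 mu; move: hmu; set a := `|mu|; move=> h1 h2.
  rewrite expr2; nra.
have N0 := norm2_ge0 (gs M i.-1).
have N1 := norm2_ge0 (gs M i).
have : mu ^+ 2 * norm2 (gs M i.-1) <= 1 / 4 * norm2 (gs M i.-1).
  by apply: ler_wpM2r.
move=> h1 h2; lra.
Qed.

Lemma chain (hred : reduced M) i : (i < r)%N ->
  norm2 (gs M 0) <= 2 ^+ i * norm2 (gs M i).
Proof.
elim: i => [|i IH] hi; first by rewrite expr0 mul1r.
have h := @lovasz_step hred i.+1 hi.
apply: le_trans (IH (ltnW hi)) _.
rewrite exprSr -mulrA ler_wpM2l ?exprn_ge0 //.
Qed.

Lemma prod_bound (hred : reduced M) :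
  norm2 (gs M 0) ^+ r <= 2 ^+ (\sum_(i < r) i) * \prod_(i < r) norm2 (gs M i).
Proof.
rewrite -prodrXr -big_split /=.
have -> : norm2 (gs M 0) ^+ r = \prod_(i < r) norm2 (gs M 0).
  by rewrite prodr_const card_ord.
apply: ler_prod => i _; rewrite norm2_ge0 /=.
exact: chain.
Qed.

End GS.

Section Lat.
Variable R : realType.
Variable r : nat.

Lemma in_lattice_col (N : 'M[R]_r) i : in_lattice N (col i N).
Proof.
exists (fun j => if j == i then 1 else 0).
rewrite (bigD1 i) //= big1 ?addr0; first by rewrite eqxx scale1r.
by move=> j /negbTE ->; rewrite scale0r.
Qed.

Lemma lat_mx (M N : 'M[R]_r) : (forall i, in_lattice N (col i M)) ->
  exists Z : 'M[int]_r, M = N *m map_mx intr Z.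
Proof.
move=> h; have [z hz] := fin_all_exists h.
exists (\matrix_(j, i) z i j); apply/matrixP => a i.
have := congr1 (fun v : 'cV[R]_r => v a 0) (hz i); rewrite !mxE summxE => ->.
by apply: eq_bigr => j _; rewrite !mxE mulrC.
Qed.

Lemma det_lat (M N : 'M[R]_r) : same_lattice M N -> \det N != 0 ->
  \det M ^+ 2 = \det N ^+ 2.
Proof.
move=> hMN hN.
have [Z hZ] := @lat_mx _ _ (fun i => (hMN _).1 (in_lattice_col M i)).
have [W hW] := @lat_mx _ _ (fun i => (hMN _).2 (in_lattice_col N i)).
have dM : \det M = \det N * (\det Z)%:~R by rewrite {1}hZ det_mulmx det_map_mx.
have dN : \det N = \det M * (\det W)%:~R by rewrite {1}hW det_mulmx det_map_mx.
have e : (\det Z * \det W)%:~R = 1 :> R.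
  apply: (mulfI hN); rewrite mulr1 intrM mulrA -dM; exact: esym.
have e' : \det Z * \det W = 1 by apply: (@intr_inj R); rewrite e.
have aZ : absz (\det Z) = 1%N.
  have := congr1 absz e'; rewrite abszM /=; move/eqP; rewrite muln_eq1.
  by case/andP => /eqP.
have z2 : (\det Z) ^+ 2 = 1.
  by rewrite -real_normK ?num_real // -abszE aZ expr1n.
by rewrite dM exprMn -rmorphXn /= z2 mulr1.
Qed.

End Lat.

From mathcomp Require Import zify.
Lemma sum_iota r : (2 * \sum_(i < r) i = r * r.-1)%N.
Proof.
elim: r => [|r IH]; first by rewrite big_ord0.
rewrite big_ord_recr /= mulnDr IH /=; case: r IH => [|r] IH /=; lia.
Qed.

Lemma dist_int_le (R : realType) (x : R) (p : int) : dist_int x <= `|x - p%:~R|.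
Proof.
rewrite /dist_int ge_min; have h1 := ler_norm (x - p%:~R).
have h2 := ler_norm (- (x - p%:~R)); rewrite normrN in h2.
case: (lerP (p%:~R) x) => h.
  have : p%:~R <= (Num.floor x)%:~R :> R by rewrite ler_int floor_ge_int.
  move=> h3; apply/orP; left; lra.
have : (Num.ceil x)%:~R <= p%:~R :> R by rewrite ler_int ceil_le_int ltW.
move=> h3; apply/orP; right; lra.
Qed.

Theorem lemma3 (R : realType) (m n : nat) (A : 'M[R]_(n, m)) (qmax : R)
  (hm : (0 < m)%N) (hn : (0 < n)%N) (hq : 1 < qmax)
  (k : nat) (hk1 : (1 <= k)%N) (hk2 : (k%:Z <= kprime m n qmax)%R)
  (M : 'M[R]_(n + m))
  (hbasis : is_basis M)
  (hred : reduced M)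
  (hlat : same_lattice M (BILLL A (cILLL R m n k)))
  (p : 'I_n -> int) (q : 'I_m -> int)
  (hform_top : forall i : 'I_n,
      colN M 0 (lshift m i) 0 = \sum_(j < m) (q j)%:~R * A i j - (p i)%:~R)
  (hform_bot : forall j : 'I_m,
      colN M 0 (rshift n j) 0 = cILLL R m n k * (q j)%:~R) :
  (forall j : 'I_m,
     `|(q j)%:~R : R| <= powR 2 (((m + n - 1) * (m + n))%:R / (4 * m%:R))
                     * powR 2 ((k * n)%:R / m%:R)) /\
  (forall i : 'I_n,
     dist_int (\sum_(j < m) (q j)%:~R * A i j) <= powR 2 (- k%:R)).
Proof.
pose a : R := - ((m + n + 3)%:R / 4) - k%:R + 1.
pose b : R := (m + n)%:R / m%:R.
have m0 : (m%:R : R) != 0 by rewrite pnatr_eq0 -lt0n.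
have two0 : (2 : R) != 0 by rewrite pnatr_eq0.
have hc : cILLL R m n k = powR (2:R) (a * b) by rewrite /cILLL powRrM.
have c0 : 0 < cILLL R m n k by rewrite hc powR_gt0.
have dB : \det (BILLL A (cILLL R m n k)) = cILLL R m n k ^+ m.
  by rewrite /BILLL det_ublock det1 det_scalar mul1r.
have dB0 : \det (BILLL A (cILLL R m n k)) != 0.
  by rewrite dB expf_neq0 // gt_eqF.
have hprod : \prod_(i < n + m) norm2 (gs M i) = powR (2:R) (a * b * (m * 2)%:R).
  rewrite -detM2 (@det_lat _ _ _ _ hlat dB0) dB -exprM hc -powR_mulrn ?powR_ge0 //.
  by rewrite -powRrM.
have hsum := sum_iota (n + m).
have pb := @prod_bound _ _ M hred; rewrite hprod in pb.
have r0 : (0 < n + m)%N by rewrite addn_gt0 hn.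
have hN : norm2 (gs M 0) <= powR (2:R) (- (2 * k%:R)).
  rewrite -(ler_pXn2r r0) ?nnegrE ?norm2_ge0 ?powR_ge0 //.
  apply: le_trans pb _.
  set S := (\sum_(i < n + m) i)%N in hsum *.
  have e1 : (2:R) ^+ S = powR 2 S%:R by rewrite powR_mulrn.
  have e2 : powR (2:R) (- (2 * k%:R)) ^+ (n + m) = powR 2 (- (2 * k%:R) * (n + m)%:R).
    by rewrite powRrM powR_mulrn // powR_ge0.
  rewrite e1 e2 -powRD; last by apply/implyP.
  rewrite le_eqVlt; apply/orP; left; apply/eqP; congr powR.
  have hS : 2 * (S%:R : R) = (n + m)%:R * ((n + m)%:R - 1).
    have := congr1 (fun x : nat => x%:R : R) hsum; rewrite /= natrM => ->.
    by rewrite natrM -subn1 natrB // r0.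
  have hS' : (S%:R : R) = (n + m)%:R * ((n + m)%:R - 1) / 2.
    by rewrite -hS; field.
  rewrite hS' /a /b !natrD natrM; field.
  by rewrite m0.
have gs0 : gs M 0 = colN M 0 by rewrite gsE big_ord0 subr0.
have hcoord : forall idx : 'I_(n + m), `|colN M 0 idx 0| <= powR (2:R) (- k%:R).
  move=> idx.
  have h1 : colN M 0 idx 0 ^+ 2 <= norm2 (gs M 0).
    rewrite gs0 /norm2 /dotv (bigD1 idx) //= expr2 lerDl.
    by apply: sumr_ge0 => j _; rewrite -expr2 sqr_ge0.
  have : `|colN M 0 idx 0| ^+ 2 <= powR (2:R) (- k%:R) ^+ 2.
    rewrite real_normK ?num_real //; apply: le_trans h1 (le_trans hN _).
    rewrite -powR_mulrn ?powR_ge0 // -powRrM.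
    have -> : - k%:R * 2%:R = - (2 * k%:R) :> R by ring.
    by [].
  by rewrite ler_pXn2r // nnegrE ?normr_ge0 ?powR_ge0.
split.
  move=> j; have := hcoord (rshift n j).
  rewrite hform_bot normrM (gtr0_norm c0) => h.
  have hqj : `|(q j)%:~R : R| <= powR (2:R) (- k%:R) / cILLL R m n k.
    by rewrite ler_pdivlMr // mulrC.
  apply: le_trans hqj _.
  rewrite hc -powRN -powRD; last by apply/implyP.
  rewrite -powRD; last by apply/implyP.
  rewrite le_eqVlt; apply/orP; left; apply/eqP; congr (powR _ _).
  rewrite /a /b !natrM natrB; last by rewrite addn_gt0 hm.
  rewrite !natrD; field; by rewrite m0.
move=> i; have := hcoord (lshift m i); rewrite hform_top => h.
exact: le_trans (@dist_int_le _ _ (p i)) h.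
Qed.
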